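(* Let $A$ be a $k$-algebra. If $V$ is any irreducible $A$-module, then the underlying $A_{\mathbb{C}}$-module $V_{\mathbb{C}}$ (obtained by forgetting the action of $k$) is an irreducible $A_{\mathbb{C}}$-module.
   Context: $k=\mathcal{O}(X)$ is the coordinate algebra of a complex affine variety $X$. A $k$-algebra is a (not necessarily unital or commutative) $\mathbb{C}$-algebra $A$ which is a unital left $k$-module with $\lambda(\omega a)=\omega(\lambda a)=(\lambda\omega)a$ and $\omega(a_1a_2)=(\omega a_1)a_2=a_1(\omega a_2)$. An $A$-module is a complex vector space $V$ with algebra morphisms $A\to\mathrm{Hom}_{\mathbb{C}}(V,V)$ and a unital $k\to\mathrm{Hom}_{\mathbb{C}}(V,V)$ such that $(\omega a)v=\omega(av)=a(\omega v)$; it is irreducible if $AV\neq\{0\}$ and there is no subspace $W$ with $\{0\}\neq W\neq V$ stable under both $A$ and $k$. $A_{\mathbb{C}}$ is $A$ with the $k$-action forgotten; an $A_{\mathbb{C}}$-module $V$ is irreducible if $A_{\mathbb{C}}V\neq\{0\}$ and there is no $A_{\mathbb{C}}$-stable subspace $W$ with $\{0\}\neq W\neq V$. *)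

(* Defs.v *)
(* The field of complex numbers is modelled as R[i] for an
   arbitrary real-number structure R : realType. *)
From HB Require Import structures.
From mathcomp Require Import all_boot all_order all_algebra.
From mathcomp Require Import complex.
From mathcomp Require Import reals.
Set Implicit Arguments. Unset Strict Implicit. Unset Printing Implicit Defensive.
Import Order.TTheory GRing.Theory Num.Theory.
Local Open Scope ring_scope.

Section Defs.
Variable C : fieldType.

Definition subalg_closed_P (k : comAlgType C) (P : k -> Prop) : Prop :=
  [/\ P 1, (forall x y, P x -> P y -> P (x + y)),
      (forall x y, P x -> P y -> P (x * y)) &
      (forall (l : C) x, P x -> P (l *: x))].

Definition finitely_generated (k : comAlgType C) : Prop :=
  exists s : seq k, forall P : k -> Prop,
    subalg_closed_P P -> (forall x, x \in s -> P x) -> forall x, P x.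

Definition reduced (k : comAlgType C) : Prop :=
  forall (x : k) (n : nat), x ^+ n = 0 -> x = 0.

Definition coordinate_algebra (k : comAlgType C) : Prop :=
  finitely_generated k /\ reduced k.

Variable k : comAlgType C.

(* A k-algebra: a (not necessarily unital nor commutative) C-algebra A,
   given by a C-vector space with a multiplication, together with a unital
   left k-module structure [act] compatible with everything. *)
Definition k_algebra (A : lmodType C) (mul : A -> A -> A) (act : k -> A -> A)
  : Prop :=
  (
      (forall a b c, mul (mul a b) c = mul a (mul b c)) /\
      (forall a b c, mul (a + b) c = mul a c + mul b c) /\
      (forall a b c, mul a (b + c) = mul a b + mul a c) /\
      (forall (l : C) a b, mul (l *: a) b = l *: mul a b) /\
      (forall (l : C) a b, mul a (l *: b) = l *: mul a b) /\
      (forall a, act 1 a = a) /\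
      (forall w1 w2 a, act (w1 * w2) a = act w1 (act w2 a)) /\
      (forall w1 w2 a, act (w1 + w2) a = act w1 a + act w2 a) /\
      (forall w a b, act w (a + b) = act w a + act w b) /\
      (forall (l : C) w a, l *: act w a = act w (l *: a)) /\
      (forall (l : C) w a, l *: act w a = act (l *: w) a) /\
      (forall w a b, act w (mul a b) = mul (act w a) b) /\
      (forall w a b, act w (mul a b) = mul a (act w b))).

Definition AC_module (A : lmodType C) (mul : A -> A -> A)
  (V : lmodType C) (rho : A -> V -> V) : Prop :=
  [/\ (forall a (l : C) u v, rho a (l *: u + v) = l *: rho a u + rho a v),
      (forall (l : C) a b v, rho (l *: a + b) v = l *: rho a v + rho b v) &
      (forall a b v, rho (mul a b) v = rho a (rho b v))].

Definition A_module (A : lmodType C) (mul : A -> A -> A) (act : k -> A -> A)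
  (V : lmodType C) (rho : A -> V -> V) (sigma : k -> V -> V) : Prop :=
  (AC_module mul rho /\
      (forall w (l : C) u v, sigma w (l *: u + v) = l *: sigma w u + sigma w v) /\
      (forall (l : C) w1 w2 v,
          sigma (l *: w1 + w2) v = l *: sigma w1 v + sigma w2 v) /\
      (forall w1 w2 v, sigma (w1 * w2) v = sigma w1 (sigma w2 v)) /\
      (forall v, sigma 1 v = v) /\
      (forall w a v, rho (act w a) v = sigma w (rho a v)) /\
      (forall w a v, rho (act w a) v = rho a (sigma w v))).

Definition subspace (V : lmodType C) (W : V -> Prop) : Prop :=
  W 0 /\ forall (l : C) u v, W u -> W v -> W (l *: u + v).

Definition acts_nontrivially (A V : lmodType C) (rho : A -> V -> V) : Prop :=
  exists a v, rho a v <> 0.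

Definition trivial_subspace (V : lmodType C) (W : V -> Prop) : Prop :=
  (forall v, W v -> v = 0) \/ (forall v, W v).

Definition irreducible_A_module (A V : lmodType C)
  (rho : A -> V -> V) (sigma : k -> V -> V) : Prop :=
  acts_nontrivially rho /\
  forall W : V -> Prop, subspace W ->
    (forall a v, W v -> W (rho a v)) ->
    (forall w v, W v -> W (sigma w v)) ->
    trivial_subspace W.

End Defs.

Definition irreducible_AC_module (C : fieldType) (A V : lmodType C)
  (rho : A -> V -> V) : Prop :=
  acts_nontrivially rho /\
  forall W : V -> Prop, subspace W ->
    (forall a v, W v -> W (rho a v)) ->
    trivial_subspace W.

(* Main.v *)
Require Import Defs.
From HB Require Import structures.
From mathcomp Require Import all_boot all_order all_algebra.
From mathcomp Require Import complex.
From mathcomp Require Import reals.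
Import Order.TTheory GRing.Theory Num.Theory.
Local Open Scope ring_scope.

Lemma lin0 (F : fieldType) (V : lmodType F) (f : V -> V)
  (hf : forall (l : F) u v, f (l *: u + v) = l *: f u + f v) : f 0 = 0.
Proof.
have h := hf 1 0 0; rewrite !scale1r !addr0 in h.
have : f 0 + f 0 - f 0 = f 0 - f 0 by rewrite -h.
by rewrite addrK subrr.
Qed.

Theorem lemma3p3 (R : realType) (k : comAlgType R[i])
  (hk : coordinate_algebra k)
  (A : lmodType R[i]) (mul : A -> A -> A) (act : k -> A -> A)
  (hA : k_algebra mul act)
  (V : lmodType R[i]) (rho : A -> V -> V) (sigma : k -> V -> V)
  (hV : A_module mul act rho sigma)
  (hirr : irreducible_A_module rho sigma) :
  irreducible_AC_module rho.
Proof.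
case: hV => [[rl _ _] [sl [_ [sm [s1 [ra ra']]]]]].
case: hirr => [hnt hirr]; split => // W [W0 Wl] WA.
have r0 a : rho a 0 = 0 by apply: lin0 (rl a).
have s0 w : sigma w 0 = 0 by apply: lin0 (sl w).
pose X := fun v => forall w, W (sigma w v).
have XW v : X v -> W v by move=> /(_ 1); rewrite s1.
have hX : trivial_subspace X.
  apply: hirr.
  - split; first by move=> w; rewrite s0.
    by move=> l u v Xu Xv w; rewrite sl; apply: Wl.
  - by move=> a v Xv w; rewrite -ra; apply: WA; apply: XW.
  - by move=> w v Xv w'; rewrite -sm.
case: hX => [X0|XT]; last by right => v; apply: XW.
have rW a v : W v -> rho a v = 0.
  by move=> Wv; apply: X0 => w; rewrite -ra; apply: WA.
pose U := fun v => forall a, rho a v = 0.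
have hU : trivial_subspace U.
  apply: hirr.
  - split; first by move=> a; rewrite r0.
    by move=> l u v Uu Uv a; rewrite rl Uu Uv scaler0 addr0.
  - by move=> a v Uv b; rewrite Uv r0.
  - by move=> w v Uv a; rewrite -ra'.
case: hU => [U0|UT].
  by left => v Wv; apply: U0 => a; apply: rW.
by case: hnt => a [v]; rewrite UT.
Qed.
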